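(* For all integers $s\geq 1$ and $n\geq 2$, \begin{align*} a_{8s3^{n}} &\equiv 3^{n+3}\cdot 2s+3^{n+2}\cdot 2s \pmod{3^{n+4}},\\ a_{8s3^{n}+1} &\equiv 3^{n+2}\cdot 5s+3^{n+1}\cdot s+1 \pmod{3^{n+4}},\\ a_{8s3^{n}+2} &\equiv 3^{n+3}\cdot 2s+3^{n+2}\cdot 5s+1 \pmod{3^{n+4}}. \end{align*}
   Context: The Narayana sequence $(a_n)_{n\geq 0}$ is defined by $a_0=0$, $a_1=a_2=1$ and $a_n=a_{n-1}+a_{n-3}$ for all $n\geq 3$. *)

(* Defs.v *)
From mathcomp Require Import all_boot.
Set Implicit Arguments. Unset Strict Implicit. Unset Printing Implicit Defensive.

(* Narayana sequence: a_0 = 0, a_1 = a_2 = 1, a_n = a_(n-1) + a_(n-3).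
   narayana_triple n = (a_n, a_(n+1), a_(n+2)). *)
Fixpoint narayana_triple (n : nat) : nat * nat * nat :=
  match n with
  | 0 => (0, 1, 1)
  | k.+1 => let: (x, y, z) := narayana_triple k in (y, z, z + x)
  end.

Definition narayana (n : nat) : nat := (narayana_triple n).1.1.

Lemma narayana0 : narayana 0 = 0. Proof. by []. Qed.
Lemma narayana1 : narayana 1 = 1. Proof. by []. Qed.
Lemma narayana2 : narayana 2 = 1. Proof. by []. Qed.
Lemma narayanaS3 n : narayana n.+3 = narayana n.+2 + narayana n.
Proof.
rewrite /narayana /=; case: (narayana_triple n) => [[x y] z] //=.
Qed.

(* Main.v *)
From Stdlib Require Import ZArith Lia.
Require Import Defs.
From mathcomp Require Import all_boot zify.

Module NZ.
Local Open Scope Z_scope.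

Record mat := Mat { a00 : Z; a01 : Z; a02 : Z; a10 : Z; a11 : Z; a12 : Z;
                    a20 : Z; a21 : Z; a22 : Z }.

Definition mul (A B : mat) : mat :=
  Mat (a00 A * a00 B + a01 A * a10 B + a02 A * a20 B)
      (a00 A * a01 B + a01 A * a11 B + a02 A * a21 B)
      (a00 A * a02 B + a01 A * a12 B + a02 A * a22 B)
      (a10 A * a00 B + a11 A * a10 B + a12 A * a20 B)
      (a10 A * a01 B + a11 A * a11 B + a12 A * a21 B)
      (a10 A * a02 B + a11 A * a12 B + a12 A * a22 B)
      (a20 A * a00 B + a21 A * a10 B + a22 A * a20 B)
      (a20 A * a01 B + a21 A * a11 B + a22 A * a21 B)
      (a20 A * a02 B + a21 A * a12 B + a22 A * a22 B).
Definition add (A B : mat) : mat :=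
  Mat (a00 A + a00 B) (a01 A + a01 B) (a02 A + a02 B)
      (a10 A + a10 B) (a11 A + a11 B) (a12 A + a12 B)
      (a20 A + a20 B) (a21 A + a21 B) (a22 A + a22 B).
Definition scal (c : Z) (A : mat) : mat :=
  Mat (c * a00 A) (c * a01 A) (c * a02 A) (c * a10 A) (c * a11 A) (c * a12 A)
      (c * a20 A) (c * a21 A) (c * a22 A).
Definition I : mat := Mat 1 0 0 0 1 0 0 0 1.
Definition M : mat := Mat 0 1 0 0 0 1 1 0 1.
Definition B : mat := Mat 19 7 17 17 19 24 24 17 16.

Fixpoint mpow (A : mat) (k : nat) : mat :=
  match k with O => I | S k => mul A (mpow A k) end.

Definition app (A : mat) (v : Z * Z * Z) : Z * Z * Z :=
  let: (x, y, z) := v in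
  (a00 A * x + a01 A * y + a02 A * z,
   a10 A * x + a11 A * y + a12 A * z,
   a20 A * x + a21 A * y + a22 A * z).

Ltac mat_solve := repeat match goal with A : mat |- _ => destruct A end;
  cbv [mul add scal I M B a00 a01 a02 a10 a11 a12 a20 a21 a22]; f_equal; ring.

Lemma mul_assoc A B C : mul A (mul B C) = mul (mul A B) C.
Proof. mat_solve. Qed.
Lemma mul_I_l A : mul I A = A.
Proof. mat_solve. Qed.
Lemma mul_I_r A : mul A I = A.
Proof. mat_solve. Qed.
Lemma app_mul A B v : app (mul A B) v = app A (app B v).
Proof. destruct v as [[x y] z]; destruct A, B; unfold mul, app; cbn [a00 a01 a02 a10 a11 a12 a20 a21 a22]; f_equal; [f_equal|]; ring. Qed.

Lemma mpow_add A a b : mpow A (a + b) = mul (mpow A a) (mpow A b).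
Proof.
induction a as [|a IH]; [by rewrite /= mul_I_l|].
by rewrite addSn /= IH mul_assoc.
Qed.

Lemma mpow_comm A a b : mul (mpow A a) (mpow A b) = mul (mpow A b) (mpow A a).
Proof. by rewrite -!mpow_add addnC. Qed.

Lemma mpow_mul A a b : mpow A (a * b) = mpow (mpow A a) b.
Proof.
induction b as [|b IH]; first by rewrite muln0.
by rewrite mulnS mpow_add IH /= .
Qed.

Definition trip (k : nat) : Z * Z * Z :=
  let: (x, y, z) := narayana_triple k in (Z.of_nat x, Z.of_nat y, Z.of_nat z).

Lemma trip_pow k : trip k = app (mpow M k) (0, 1, 1).
Proof.
induction k as [|k IH]; first by [].
have -> : mpow M k.+1 = mul M (mpow M k) by [].
rewrite app_mul -IH /trip /=.
case: (narayana_triple k) => [[x y] z].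
rewrite /app /M; cbn [a00 a01 a02 a10 a11 a12 a20 a21 a22].
f_equal; [f_equal|]; rewrite -?plusE ?Nat2Z.inj_add. all: lia.
Qed.

Fixpoint tZ (m : nat) : Z := match m with O => 1 | S m => 3 * tZ m end.

Lemma base : exists Y, mpow M 72 = add I (add (scal 27 B) (scal 729 Y)).
Proof.
exists (Mat 238858950 162980103 350064806 350064806 238858950 513044909 513044909 350064806 751903860).
vm_compute. reflexivity.
Qed.

Lemma cube t Y : let P := add I (add (scal (27 * t) B) (scal (729 * t) Y)) in
  let Z' := add B (scal 27 Y) in
  mul P (mul P (mul P I)) = add I (add (scal (81 * t) B) (scal (2187 * t)
     (add Y (add (scal t (mul Z' Z')) (scal (9 * t * t) (mul Z' (mul Z' Z'))))))).
Proof. cbv zeta. mat_solve. Qed.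

Lemma key m : exists Y, mpow M (72 * 3 ^ m) =
  add I (add (scal (27 * tZ m) B) (scal (729 * tZ m) Y)).
Proof.
induction m as [|m [Y HY]]; first exact: base.
have -> : (72 * 3 ^ m.+1 = (72 * 3 ^ m) * 3)%nat.
  by rewrite expnS mulnCA mulnC.
have -> : tZ m.+1 = 3 * tZ m by [].
rewrite mpow_mul HY.
have -> : forall A, mpow A 3 = mul A (mul A (mul A I)) by [].
rewrite cube.
eexists. congr (add I (add (scal _ B) (scal _ _))); ring.
Qed.

Lemma spow t Y s : let P := add I (add (scal (27 * t) B) (scal (729 * t) Y)) in
  exists W, mpow P s = add I (add (scal (Z.of_nat s * 27 * t) B) (scal (729 * t) W)).
Proof.
cbv zeta. induction s as [|s [W HW]].
  exists (Mat 0 0 0 0 0 0 0 0 0). change (mpow _ 0) with I. mat_solve.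
change (mpow ?A s.+1) with (mul A (mpow A s)). rewrite HW Nat2Z.inj_succ.
set c := 27 * t. set d := 729 * t. set sZ := Z.of_nat s.
exists (add W (add (scal (sZ * t) (mul B B)) (add (scal c (mul B W))
   (add Y (add (scal (sZ * c) (mul Y B)) (scal d (mul Y W))))))).
rewrite /c /d.
destruct W, Y; cbv [mul add scal I M B a00 a01 a02 a10 a11 a12 a20 a21 a22]; f_equal; ring.
Qed.

End NZ.

Lemma tZ_nat m : NZ.tZ m = Z.of_nat (3 ^ m).
Proof.
elim: m => [|m IH] //.
change (NZ.tZ m.+1) with (3 * NZ.tZ m)%Z.
rewrite IH expnS -[(3 * _)%nat]/(Nat.mul 3 _); lia.
Qed.

Lemma narayana_trip k : narayana_triple k = (narayana k, narayana k.+1, narayana k.+2).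
Proof.
rewrite /narayana /=; by case: (narayana_triple k) => [[x y] z] /=.
Qed.

Lemma cong_nat (x y d : nat) (W : Z) :
  Z.of_nat x = (Z.of_nat y + Z.of_nat d * W)%Z -> x = y %[mod d].
Proof.
move=> H.
case: (Z.le_gt_cases 0 W) => HW.
  have -> : x = (Z.to_nat W * d + y)%nat by lia.
  by rewrite modnMDl.
have -> : y = (Z.to_nat (- W) * d + x)%nat by lia.
by rewrite modnMDl.
Qed.

Theorem proposition3p4 (s n : nat) (hs : 1 <= s) (hn : 2 <= n) :
  [/\ narayana (8 * s * 3 ^ n)
        = 3 ^ n.+3 * 2 * s + 3 ^ n.+2 * 2 * s %[mod 3 ^ n.+4],
      narayana (8 * s * 3 ^ n).+1
        = 3 ^ n.+2 * 5 * s + 3 ^ n.+1 * s + 1 %[mod 3 ^ n.+4] &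
      narayana (8 * s * 3 ^ n).+2
        = 3 ^ n.+3 * 2 * s + 3 ^ n.+2 * 5 * s + 1 %[mod 3 ^ n.+4]].
Proof.
case: n hn => [|[|m]] // _.
have [Y HY] := NZ.key m.
have [W HW] := NZ.spow (NZ.tZ m) Y s.
have HK : (8 * s * 3 ^ m.+2 = 72 * 3 ^ m * s)%nat.
  by rewrite !expnS; nia.
have Ht := NZ.trip_pow (8 * s * 3 ^ m.+2).
rewrite HK NZ.mpow_mul HY HW -HK in Ht.
move: Ht; rewrite /NZ.trip narayana_trip.
destruct W as [w00 w01 w02 w10 w11 w12 w20 w21 w22].
cbv [NZ.app NZ.add NZ.scal NZ.I NZ.B NZ.a00 NZ.a01 NZ.a02 NZ.a10 NZ.a11 NZ.a12 NZ.a20 NZ.a21 NZ.a22].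
rewrite tZ_nat.
move: (8 * s * 3 ^ m.+2)%nat => K.
move=> Ht.
have H1 := congr1 (fun p => (p.1).1) Ht.
have H2 := congr1 (fun p => (p.1).2) Ht.
have H3 := congr1 (fun p => p.2) Ht.
cbn [fst snd] in H1, H2, H3.
clear Ht HW HY HK.
rewrite !expnS.
move: (3 ^ m)%nat H1 H2 H3 => T H1 H2 H3.
split.
- apply: (@cong_nat _ _ _ (w01 + w02)%Z). rewrite H1. lia.
- apply: (@cong_nat _ _ _ (Z.of_nat s + w11 + w12)%Z). rewrite H2. lia.
- apply: (@cong_nat _ _ _ (w21 + w22)%Z). rewrite H3. lia.
Qed.
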